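(* Let $\mathbf{n}^\xi_{1:H}$ be a sequence of count tables generated by the joint state-action trajectory of $M$ agents over horizon $H$ (as described in the context), and define for $t=1,\dots,H$ $$R^\xi_t=\sum_{T=t}^H\sum_{i\in S,j\in A}n^\xi_T(i,j)\,r_T\big(i,j,\mathbf{n}^\xi_T\big).$$ Let $V^\xi_t(i,j)$ be the individual value function defined in the context. Then for every $t$, $$R^\xi_t=\sum_{i\in S,j\in A}n^\xi_t(i,j)\,V^\xi_t(i,j).$$
   Context: There are $M$ agents, a finite local state space $S$, finite action set $A$, horizon $H$. A joint trajectory assigns each agent $m$ states $s^m_1,\dots,s^m_H\in S$ and actions $a^m_1,\dots,a^m_H\in A$. Its counts are $n^\xi_t(i)=|\{m:s^m_t=i\}|$, $n^\xi_t(i,j)=|\{m:(s^m_t,a^m_t)=(i,j)\}|$, $n^\xi_t(i,j,i')=|\{m:(s^m_t,a^m_t,s^m_{t+1})=(i,j,i')\}|$ for $t<H$, and $\mathbf{n}^\xi_t=(n^\xi_t(i))_{i\in S}$. $r_t(i,j,\mathbf{n})$ is a given real-valued local reward function. The individual value function is defined, for pairs $(i,j)$ with $n^\xi_t(i,j)>0$, by backward recursion: $V^\xi_H(i,j)=r_H(i,j,\mathbf{n}^\xi_H)$ and, for $t<H$, $$V^\xi_t(i,j)=r_t(i,j,\mathbf{n}^\xi_t)+\sum_{i'\in S,j'\in A}\frac{n^\xi_t(i,j,i')}{n^\xi_t(i,j)}\cdot\frac{n^\xi_{t+1}(i',j')}{n^\xi_{t+1}(i')}\,V^\xi_{t+1}(i',j'),$$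 where terms with zero count numerator are taken to be $0$; likewise $n^\xi_t(i,j)V^\xi_t(i,j)$ is taken to be $0$ when $n^\xi_t(i,j)=0$. *)

(* Defs.v *)
From HB Require Import structures.
From mathcomp Require Import all_boot all_order all_algebra.
Set Implicit Arguments. Unset Strict Implicit. Unset Printing Implicit Defensive.
Import Order.TTheory GRing.Theory Num.Theory.
Local Open Scope ring_scope.

Section MF.
Variables (R : realFieldType) (S A : finType) (M H : nat).
(* joint trajectory: state and action of agent m at time t (only t = 1..H matter) *)
Variables (s : 'I_M -> nat -> S) (a : 'I_M -> nat -> A).
(* local reward r_t(i, j, n) where n : S -> nat is the state-count table *)
Variable (r : nat -> S -> A -> (S -> nat) -> R).

Definition cnt_s (t : nat) (i : S) : nat := #|[set m : 'I_M | s m t == i]|.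
Definition cnt_sa (t : nat) (i : S) (j : A) : nat :=
  #|[set m : 'I_M | (s m t == i) && (a m t == j)]|.
Definition cnt_sas (t : nat) (i : S) (j : A) (i' : S) : nat :=
  #|[set m : 'I_M | [&& s m t == i, a m t == j & s m t.+1 == i']]|.

Definition nvec (t : nat) : S -> nat := cnt_s t.

Definition Vterm (t : nat) (i : S) (j : A) (i' : S) (j' : A) (v : R) : R :=
  if (cnt_sas t i j i' == 0%N) || (cnt_sa t.+1 i' j' == 0%N) then 0
  else (cnt_sas t i j i')%:R / (cnt_sa t i j)%:R *
       ((cnt_sa t.+1 i' j')%:R / (cnt_s t.+1 i')%:R) * v.

(* Vrec k t = value at time t, with k = H - t steps remaining *)
Fixpoint Vrec (k t : nat) (i : S) (j : A) : R :=
  match k with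
  | 0 => r t i j (nvec t)
  | k'.+1 => r t i j (nvec t) +
      \sum_(i' : S) \sum_(j' : A) Vterm t i j i' j' (Vrec k' t.+1 i' j')
  end.

Definition Vind (t : nat) (i : S) (j : A) : R := Vrec (H - t) t i j.

Definition Rret (t : nat) : R :=
  \sum_(t <= T < H.+1) \sum_(i : S) \sum_(j : A)
     (cnt_sa T i j)%:R * r T i j (nvec T).

Definition nV (t : nat) (i : S) (j : A) : R :=
  if cnt_sa t i j == 0%N then 0 else (cnt_sa t i j)%:R * Vind t i j.
End MF.

(* Main.v *)
Require Import Defs.
From HB Require Import structures.
From mathcomp Require Import all_boot all_order all_algebra.
Import Order.TTheory GRing.Theory Num.Theory.
Local Open Scope ring_scope.

Section Proofs.
Variables (R : realFieldType) (S A : finType) (M H : nat).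
Variables (s : 'I_M -> nat -> S) (a : 'I_M -> nat -> A).
Variable (r : nat -> S -> A -> (S -> nat) -> R).

Lemma sas_le_sa t i j i' : (cnt_sas s a t i j i' <= cnt_sa s a t i j)%N.
Proof.
apply: subset_leq_card; apply/subsetP => m; rewrite !inE.
by case/and3P => -> ->.
Qed.

Lemma sa_le_s t i j : (cnt_sa s a t i j <= cnt_s s t i)%N.
Proof.
apply: subset_leq_card; apply/subsetP => m; rewrite !inE.
by case/andP => ->.
Qed.

Lemma sum_sas t i' :
  (\sum_(i : S) \sum_(j : A) cnt_sas s a t i j i')%N = cnt_s s t.+1 i'.
Proof.
rewrite /cnt_s -sum1dep_card (partition_big (fun m => s m t) xpredT) //=.
apply: eq_bigr => i _.
rewrite (partition_big (fun m => a m t) xpredT) //=.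
apply: eq_bigr => j _.
rewrite /cnt_sas -sum1dep_card; apply: eq_bigl => m.
by case: (s m t.+1 == i'); case: (s m t == i); case: (a m t == j).
Qed.

Lemma step t (v : S -> A -> R) :
  \sum_(i : S) \sum_(j : A) (cnt_sa s a t i j)%:R *
     \sum_(i' : S) \sum_(j' : A) Vterm s a t i j i' j' (v i' j')
  = \sum_(i' : S) \sum_(j' : A) (cnt_sa s a t.+1 i' j')%:R * v i' j'.
Proof.
have E : forall i j i' j', (cnt_sa s a t i j)%:R * Vterm s a t i j i' j' (v i' j')
   = (cnt_sas s a t i j i')%:R * ((cnt_sa s a t.+1 i' j')%:R / (cnt_s s t.+1 i')%:R * v i' j') :> R.
  move=> i j i' j'; rewrite /Vterm.
  case: eqP => [->|H1] /=; first by rewrite mulr0 mul0r.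
  case: eqP => [->|H2] /=; first by rewrite mulr0 !mul0r mulr0.
  have H3 : (cnt_sa s a t i j)%:R != 0 :> R.
    rewrite pnatr_eq0; apply/eqP => H0.
    by apply: H1; apply/eqP; rewrite -leqn0 -H0 sas_le_sa.
  rewrite !mulrA (mulrC _ (cnt_sas _ _ _ _ _ _)%:R) -!mulrA; congr (_ * _); rewrite !mulrA divff // mul1r.
  by [].
transitivity (\sum_(i : S) \sum_(j : A) \sum_(i' : S) \sum_(j' : A)
   (cnt_sas s a t i j i')%:R * ((cnt_sa s a t.+1 i' j')%:R / (cnt_s s t.+1 i')%:R * v i' j')).
  apply: eq_bigr => i _; apply: eq_bigr => j _; rewrite mulr_sumr.
  apply: eq_bigr => i' _; rewrite mulr_sumr; apply: eq_bigr => j' _; exact: E.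
transitivity (\sum_(i : S) \sum_(i' : S) \sum_(j' : A) \sum_(j : A)
   (cnt_sas s a t i j i')%:R * ((cnt_sa s a t.+1 i' j')%:R / (cnt_s s t.+1 i')%:R * v i' j')).
  apply: eq_bigr => i _; rewrite exchange_big /=; apply: eq_bigr => i' _.
  by rewrite exchange_big.
transitivity (\sum_(i' : S) \sum_(j' : A) \sum_(i : S) \sum_(j : A)
   (cnt_sas s a t i j i')%:R * ((cnt_sa s a t.+1 i' j')%:R / (cnt_s s t.+1 i')%:R * v i' j')).
  rewrite exchange_big /=; apply: eq_bigr => i' _.
  by rewrite exchange_big.
apply: eq_bigr => i' _; apply: eq_bigr => j' _.
under eq_bigr => i _ do rewrite -mulr_suml -natr_sum.
rewrite -mulr_suml -natr_sum sum_sas.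
have Hle := sa_le_s t.+1 i' j'.
have [Hz|Hs] := eqVneq (cnt_s s t.+1 i') 0%N.
  move: Hle; rewrite Hz leqn0 => /eqP ->.
  by rewrite !mul0r.
by rewrite mulrA [_ * (_ / _)]mulrCA divff ?mulr1 // pnatr_eq0.
Qed.

Lemma main k t :
  \sum_(i : S) \sum_(j : A) (cnt_sa s a t i j)%:R * Vrec s a r k t i j
  = \sum_(t <= T < t + k.+1) \sum_(i : S) \sum_(j : A)
       (cnt_sa s a T i j)%:R * r T i j (nvec s T).
Proof.
elim: k t => [|k IH] t /=.
  by rewrite addn1 big_nat1.
rewrite big_ltn; last by rewrite addnS ltnS leq_addr.
under eq_bigr => i _ do under eq_bigr => j _ do rewrite mulrDr.
under eq_bigr => i _ do rewrite big_split /=.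
rewrite big_split /= step IH.
by rewrite addSnnS.
Qed.
End Proofs.

Theorem lemma1 (R : realFieldType) (S A : finType) (M H : nat)
  (s : 'I_M -> nat -> S) (a : 'I_M -> nat -> A)
  (r : nat -> S -> A -> (S -> nat) -> R) (t : nat) :
  (1 <= t <= H)%N ->
  Rret H s a r t = \sum_(i : S) \sum_(j : A) nV H s a r t i j.
Proof.
case/andP => _ Ht.
have -> : \sum_(i : S) \sum_(j : A) nV H s a r t i j =
  \sum_(i : S) \sum_(j : A) (cnt_sa s a t i j)%:R * Vrec s a r (H - t) t i j.
  apply: eq_bigr => i _; apply: eq_bigr => j _; rewrite /nV /Vind.
  by case: eqP => [->|//]; rewrite mul0r.
by rewrite main /Rret addnS subnKC.
Qed.
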